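(* Let $T$ be an equilateral triangle. Then for every positive integer $n$, $$h(n,T)=\left\lfloor \frac{n}{3} \right\rfloor \cdot \left\lfloor \frac{n+1}{3} \right\rfloor \cdot \left\lfloor \frac{n+2}{3} \right\rfloor.$$
   Context: Let $T$ be a triangle with side lengths $a,b,c$, let $\varepsilon>0$ and $\varepsilon'=\varepsilon\cdot\min\{a,b,c\}$. A triangle $A'B'C'$ is $\varepsilon$-congruent to $T$ if there exist points $A,B,C\in\mathbb{R}^2$ such that $ABC$ is congruent to $T$ and $A',B',C'$ lie in the closed disks of radius $\varepsilon'$ around $A,B,C$ respectively. $h(n,T,\varepsilon)$ denotes the maximum, over all point sets $P\subseteq\mathbb{R}^2$ with $|P|=n$, of the number of 3-element subsets of $P$ forming a triangle $\varepsilon$-congruent to $T$, and $h(n,T):=\min_{\varepsilon>0}h(n,T,\varepsilon)$. *)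

(* Defs.v *)
From HB Require Import structures.
From mathcomp Require Import all_boot all_order all_algebra.
From mathcomp Require Import boolp.
From mathcomp Require Import Rstruct.
From Stdlib Require Import ClassicalEpsilon.
From Stdlib Require Rdefinitions.
Set Implicit Arguments. Unset Strict Implicit. Unset Printing Implicit Defensive.
Import Order.TTheory GRing.Theory Num.Theory.
Local Open Scope ring_scope.

Notation R := Rdefinitions.R.

Definition pt := (R * R)%type.

Definition dist (p q : pt) : R :=
  Num.sqrt ((p.1 - q.1) ^+ 2 + (p.2 - q.2) ^+ 2).

(* triangle ABC is congruent to the triangle T with side lengths a b c
   (a = |BC|, b = |CA|, c = |AB|) *)
Definition congr_T (a b c : R) (A B C : pt) : Prop :=
  dist B C = a /\ dist C A = b /\ dist A B = c.

Definition eps_congr (a b c eps : R) (A' B' C' : pt) : Prop :=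
  let e' := eps * Num.min a (Num.min b c) in
  exists A B C : pt, congr_T a b c A B C /\
    dist A' A <= e' /\ dist B' B <= e' /\ dist C' C <= e'.

(* number of 3-element subsets of the n-point set P = image of the injective
   p : 'I_n -> pt that form a triangle eps-congruent to T *)
Definition count_eps (n : nat) (p : 'I_n -> pt) (a b c eps : R) : nat :=
  #|[set S : {set 'I_n} | (#|S| == 3)%N &&
     `[< exists i j k : 'I_n, S = [set i; j; k] /\
           eps_congr a b c eps (p i) (p j) (p k) >] ]|.

Definition is_h_eps (n : nat) (a b c eps : R) (m : nat) : Prop :=
  (exists p : 'I_n -> pt, injective p /\ count_eps p a b c eps = m) /\
  (forall p : 'I_n -> pt, injective p -> (count_eps p a b c eps <= m)%N).

Definition h_eps (n : nat) (a b c eps : R) : nat :=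
  epsilon (inhabits 0%N) (is_h_eps n a b c eps).

Definition is_h (n : nat) (a b c : R) (m : nat) : Prop :=
  (exists eps : R, 0 < eps /\ h_eps n a b c eps = m) /\
  (forall eps : R, 0 < eps -> (m <= h_eps n a b c eps)%N).

Definition h (n : nat) (a b c : R) : nat :=
  epsilon (inhabits 0%N) (is_h n a b c).

(* Main.v *)
Require Import Defs.
From HB Require Import structures.
From mathcomp Require Import all_boot all_order all_algebra.
From mathcomp Require Import Rstruct ring lra boolp zify.
From Stdlib Require Import ClassicalEpsilon.
Set Implicit Arguments. Unset Strict Implicit. Unset Printing Implicit Defensive.
Import Order.TTheory GRing.Theory Num.Theory.

Definition clique (V : finType) (adj : rel V) (S : {set V}) : bool :=
  [forall x in S, forall y in S, (x != y) ==> adj x y].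
Definition cl (V : finType) (adj : rel V) (k : nat) (U : {set V}) :=
  [set S : {set V} | (S \subset U) && (#|S| == k) && clique adj S].
Definition nb (V : finType) (adj : rel V) (x : V) (U : {set V}) :=
  [set v in U | adj x v].
Definition good (V : finType) (adj : rel V) : Prop :=
  (forall x y, adj x y = adj y x) /\ (forall x, adj x x = false) /\
  (forall a b c d, adj a b -> adj a c -> adj a d -> adj b c -> adj b d -> adj c d -> False).



Definition tt (m : nat) := (m %/ 3 * ((m + 1) %/ 3) * ((m + 2) %/ 3))%N.

Lemma dec3 m : exists q r, (r < 3 /\ m = 3 * q + r)%N.
Proof. exists (m %/ 3), (m %% 3). split; [by rewrite ltn_mod | by rewrite mulnC -divn_eq]. Qed.
Lemma div3 q r : ((3 * q + r) %/ 3 = q + r %/ 3)%N.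
Proof. by rewrite mulnC divnMDl. Qed.
Lemma div3b q r c : ((3 * q + r + c) %/ 3 = q + (r + c) %/ 3)%N.
Proof. by rewrite -addnA div3. Qed.
Lemma a3 n : (n %/ 3 + (n + 1) %/ 3 + (n + 2) %/ 3 = n)%N.
Proof. have [q [r [hr ->]]] := dec3 n. rewrite !div3b div3.
case: r hr => [|[|[|r]]] // _ /=; lia. Qed.
Lemma sq3 q r : ((3*q+r)*(3*q+r) = 3 * (3*q*q + 2*q*r) + r*r)%N.
Proof. nia. Qed.
Lemma a1 m : (m * m %/ 3 + 2 * m + 3 <= (m+3)*(m+3) %/ 3)%N.
Proof. have [q [r [hr ->]]] := dec3 m.
have -> : (3*q+r+3 = 3*(q+1)+r)%N by lia.
rewrite !sq3 !div3. nia. Qed.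
Lemma a2 m : (m * m %/ 3 + m + 1 <= (m+2)*(m+2) %/ 3)%N.
Proof. have [q [r [hr ->]]] := dec3 m.
case: r hr => [|[|[|r]]] // _.
- have -> : (3*q+0+2 = 3*q+2)%N by lia.
  rewrite !sq3 !div3 /=. nia.
- have -> : (3*q+1+2 = 3*(q+1)+0)%N by lia.
  rewrite !sq3 !div3 /=. nia.
- have -> : (3*q+2+2 = 3*(q+1)+1)%N by lia.
  rewrite !sq3 !div3 /=. nia.
Qed.
Lemma a4 m : (tt m + m * m %/ 3 + m + 1 <= tt (m+3))%N.
Proof. rewrite /tt. have [q [r [hr ->]]] := dec3 m.
rewrite sq3 div3.
have -> : (3*q+r+3 = 3*(q+1)+r)%N by lia.
rewrite !div3b !div3.
case: r hr => [|[|[|r]]] // _ /=; nia. Qed.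


Lemma cardU_le (V : finType) (A B : {set V}) : (#|A :|: B| <= #|A| + #|B|)%N.
Proof. by rewrite -cardsUI leq_addr. Qed.

Lemma cliqueP (V : finType) (adj : rel V) (S : {set V}) :
  reflect (forall x y, x \in S -> y \in S -> x != y -> adj x y) (clique adj S).
Proof.
apply: (iffP forallP) => [H x y xS yS nxy | H x].
  by move: (H x); rewrite xS => /forallP/(_ y); rewrite yS nxy.
apply/implyP => xS; apply/forallP => y; apply/implyP => yS; apply/implyP.
exact: H.
Qed.

Lemma clique_sub (V : finType) (adj : rel V) (S T : {set V}) :
  S \subset T -> clique adj T -> clique adj S.
Proof.
move=> /subsetP ST /cliqueP H; apply/cliqueP => x y xS yS; apply: H; exact: ST.
Qed.

Lemma inclP (V : finType) (adj : rel V) k U S :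
  (S \in cl adj k U) = [&& S \subset U, #|S| == k & clique adj S].
Proof. by rewrite inE andbA. Qed.

Lemma no_big_clique (V : finType) (adj : rel V) (S : {set V}) :
  good adj -> clique adj S -> (4 <= #|S|)%N -> False.
Proof.
move=> [_ [_ K4]] /cliqueP C h4.
have pick (A : {set V}) : (0 < #|A|)%N -> exists a, a \in A.
  by move=> /card_gt0P.
have [a aS] := pick S (ltac:(lia)).
have h3 : (3 <= #|S :\ a|)%N by move: h4; rewrite (cardsD1 a S) aS /=; lia.
have [b bS] := pick (S :\ a) (ltac:(lia)).
have h2 : (2 <= #|S :\ a :\ b|)%N by move: h3; rewrite (cardsD1 b (S :\ a)) bS /=; lia.
have [c cS] := pick (S :\ a :\ b) (ltac:(lia)).
have h1 : (1 <= #|S :\ a :\ b :\ c|)%N by move: h2; rewrite (cardsD1 c (S :\ a :\ b)) cS /=; lia.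
have [d dS] := pick (S :\ a :\ b :\ c) (ltac:(lia)).
move: bS cS dS; rewrite !inE => /andP[ba bS] /andP[cb /andP[ca cS]]
  /andP[dc /andP[db /andP[da dS]]].
by apply: (K4 a b c d); apply: C => //; rewrite eq_sym.
Qed.

Lemma L1 (V : finType) (adj : rel V) (U : {set V}) x :
  good adj -> x \in U ->
  (#|cl adj 2 U| <= #|cl adj 2 (U :\ x)| + #|nb adj x (U :\ x)|)%N.
Proof.
move=> [sym [irr _]] xU.
set M := [set S in cl adj 2 U | x \in S].
have sub : cl adj 2 U \subset cl adj 2 (U :\ x) :|: M.
  apply/subsetP => S SU; rewrite in_setU; apply/orP.
  case xS: (x \in S); first by right; rewrite /M inE SU xS.
  left; move: SU; rewrite !inclP => /and3P[sU h2 hc]; rewrite h2 hc !andbT.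
  apply/subsetP => v vS; rewrite !inE (subsetP sU _ vS) andbT.
  by apply: contraFN xS => /eqP <-.
apply: (leq_trans (subset_leq_card sub)); apply: (leq_trans (cardU_le _ _)).
rewrite leq_add2l.
have subM : M \subset [set [set x; v] | v in nb adj x (U :\ x)].
  apply/subsetP => S; rewrite inE inclP => /andP[/and3P[sU /cards2P[a [b [nab eS]]] /cliqueP C] xS].
  move: xS; rewrite eS !inE => /orP[] /eqP ->.
  - apply/imsetP; exists b => //.
    by rewrite !inE eq_sym nab (subsetP sU) ?eS ?inE ?eqxx ?orbT //= C ?eS ?inE ?eqxx ?orbT.
  - apply/imsetP; exists a; last by rewrite setUC.
    rewrite !inE nab (subsetP sU) ?eS ?inE ?eqxx ?orbT //= C ?eS ?inE ?eqxx ?orbT //.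
    by rewrite eq_sym.
exact: (leq_trans (subset_leq_card subM) (leq_imset_card _ _)).
Qed.

Lemma three_sets (V : finType) (A B C W : {set V}) :
  A \subset W -> B \subset W -> C \subset W -> A :&: B :&: C = set0 ->
  (#|A| + #|B| + #|C| <= 2 * #|W|)%N.
Proof.
move=> AW BW CW e0.
have u1 := cardsUI A B. have u2 := cardsUI (A :|: B) C.
have h1 : A :|: B :|: C \subset W by rewrite !subUset AW BW CW.
have h2 : (A :&: B) :|: ((A :|: B) :&: C) \subset W.
  by rewrite subUset (subset_trans (subsetIl _ _) AW) (subset_trans (subsetIr _ _) CW).
have e : #|A :&: B| + #|(A :|: B) :&: C| = #|(A :&: B) :|: ((A :|: B) :&: C)|.
  rewrite -cardsUI.
  suff -> : A :&: B :&: ((A :|: B) :&: C) = set0 by rewrite cards0 addn0.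
  apply/setP => v; move/setP: e0 => /(_ v); rewrite !inE.
  by case: (v \in A); case: (v \in B); case: (v \in C).
have := subset_leq_card h1; have := subset_leq_card h2; lia.
Qed.

Lemma card_sub3 (V : finType) (U : {set V}) x y z :
  x \in U -> y \in U -> z \in U -> x != y -> y != z -> x != z ->
  #|U| = (#|U :\ x :\ y :\ z| + 3)%N.
Proof.
move=> xU yU zU xy yz xz.
rewrite (cardsD1 x U) xU (cardsD1 y (U :\ x)) !inE eq_sym xy yU
  (cardsD1 z (U :\ x :\ y)) !inE eq_sym yz eq_sym xz zU /=; lia.
Qed.

Lemma nb_D1 (V : finType) (adj : rel V) x (W : {set V}) a :
  (#|nb adj x W| <= #|nb adj x (W :\ a)| + 1)%N.
Proof.
have sub : nb adj x W \subset nb adj x (W :\ a) :|: [set a].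
  apply/subsetP => v; rewrite /nb !inE => /andP[vW ->]; rewrite vW !andbT.
  by case: (v == a).
by rewrite -(cards1 a); apply: (leq_trans (subset_leq_card sub)); apply: cardU_le.
Qed.

Lemma noedge (V : finType) (adj : rel V) (U : {set V}) :
  (forall x y, x \in U -> y \in U -> adj x y = false) -> #|cl adj 2 U| = 0%N.
Proof.
move=> H; apply/eqP; rewrite cards_eq0; apply/eqP/setP => S; rewrite inclP inE.
apply/negbTE/negP => /and3P[sU /cards2P[a [b [nab eS]]] /cliqueP C].
have aS : a \in S by rewrite eS !inE eqxx.
have bS : b \in S by rewrite eS !inE eqxx orbT.
by move: (C a b aS bS nab); rewrite H // (subsetP sU).
Qed.

Lemma turan (V : finType) (adj : rel V) :
  good adj -> forall U : {set V}, (#|cl adj 2 U| <= #|U| * #|U| %/ 3)%N.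
Proof.
move=> g; have [sym [irr K4]] := g.
suff H : forall n (U : {set V}), (#|U| <= n)%N -> (#|cl adj 2 U| <= #|U| * #|U| %/ 3)%N.
  by move=> U; apply: (H #|U|).
elim=> [|n IH] U hU.
  rewrite noedge // => x y xU; move: hU; rewrite leqn0 => /eqP/cards0_eq U0.
  by move: xU; rewrite U0 inE.
case: (boolP [exists x, exists y, exists z,
   [&& x \in U, y \in U, z \in U, adj x y, adj y z & adj x z]]).
  move=> /existsP[x /existsP[y /existsP[z /and5P[xU yU zU xy /andP[yz xz]]]]].
  have nxy : x != y by apply: contraTneq xy => ->; rewrite irr.
  have nyz : y != z by apply: contraTneq yz => ->; rewrite irr.
  have nxz : x != z by apply: contraTneq xz => ->; rewrite irr.
  set U' := U :\ x :\ y :\ z.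
  have cU := card_sub3 xU yU zU nxy nyz nxz; rewrite -/U' in cU.
  have IH' := IH U' ltac:(lia).
  have e1 := L1 g xU.
  have yU1 : y \in U :\ x by rewrite !inE eq_sym nxy.
  have e2 := L1 g yU1.
  have zU2 : z \in U :\ x :\ y by rewrite !inE eq_sym nyz eq_sym nxz zU.
  have e3 := L1 g zU2. rewrite -/U' in e3.
  have d1 := nb_D1 adj x (U :\ x) y.
  have d2 := nb_D1 adj x (U :\ x :\ y) z. rewrite -/U' in d2.
  have d3 := nb_D1 adj y (U :\ x :\ y) z. rewrite -/U' in d3.
  have t3 : (#|nb adj x U'| + #|nb adj y U'| + #|nb adj z U'| <= 2 * #|U'|)%N.
    apply: three_sets; rewrite /nb; try exact: subset_predI.
    - by apply/subsetP => v; rewrite inE => /andP[].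
    - by apply/subsetP => v; rewrite inE => /andP[].
    - by apply/subsetP => v; rewrite inE => /andP[].
    apply/setP => v; rewrite !inE; apply/negbTE/negP.
    move=> /andP[/andP[/andP[_ xv] /andP[_ yv]] /andP[_ zv]].
    by apply: (K4 x y z v).
  have ar := a1 #|U'|.
  rewrite cU; move: IH' ar e1 e2 e3 d1 d2 d3 t3.
  generalize (#|U'| * #|U'| %/ 3) ((#|U'| + 3) * (#|U'| + 3) %/ 3).
  clear; lia.
move=> notri.
case: (boolP [exists x, exists y, [&& x \in U, y \in U & adj x y]]); last first.
  move=> noe; rewrite noedge // => x y xU yU; apply/negbTE; apply: contra noe => e.
  by apply/existsP; exists x; apply/existsP; exists y; rewrite xU yU e.
move=> /existsP[x /existsP[y /and3P[xU yU xy]]].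
have nxy : x != y by apply: contraTneq xy => ->; rewrite irr.
set U' := U :\ x :\ y.
have cU : #|U| = (#|U'| + 2)%N.
  rewrite (cardsD1 x U) xU (cardsD1 y (U :\ x)) !inE eq_sym nxy yU /= /U'; lia.
have IH' := IH U' ltac:(lia).
have e1 := L1 g xU.
have yU1 : y \in U :\ x by rewrite !inE eq_sym nxy.
have e2 := L1 g yU1. rewrite -/U' in e2.
have d1 := nb_D1 adj x (U :\ x) y. rewrite -/U' in d1.
have t2 : (#|nb adj x U'| + #|nb adj y U'| <= #|U'|)%N.
  rewrite -cardsUI.
  have -> : nb adj x U' :&: nb adj y U' = set0.
    apply/setP => v; rewrite !inE; apply/negbTE/negP.
    move=> /andP[/andP[vU xv] /andP[_ yv]].
    move/negP: notri; apply; apply/existsP; exists x; apply/existsP; exists y.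
    apply/existsP; exists v; rewrite xU yU xy xv yv /=.
    by move: vU => /and3P[_ _ ->].
  rewrite cards0 addn0; apply: subset_leq_card.
  by rewrite subUset; apply/andP; split; apply/subsetP => v; rewrite inE => /andP[].
have ar := a2 #|U'|.
rewrite cU; move: IH' ar e1 e2 d1 t2.
generalize (#|U'| * #|U'| %/ 3) ((#|U'| + 2) * (#|U'| + 2) %/ 3).
clear; lia.
Qed.

Lemma clique3 (V : finType) (adj : rel V) x y z :
  (forall x y, adj x y = adj y x) -> adj x y -> adj y z -> adj x z ->
  clique adj [set x; y; z].
Proof.
move=> sym xy yz xz; apply/cliqueP => a b.
rewrite !inE => ha hb.
by move: ha hb => /orP[/orP[]|] /eqP-> /orP[/orP[]|] /eqP->; rewrite ?eqxx // => _;
  rewrite // sym.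
Qed.

Lemma card3_pick (V : finType) (S : {set V}) :
  #|S| = 3%N -> exists a b c, [/\ a \in S, b \in S, c \in S & [/\ a != b, b != c & a != c]].
Proof.
move=> h3.
have [a aS] : exists a, a \in S by apply/card_gt0P; rewrite h3.
have : #|S :\ a| == 2%N by apply/eqP; move: h3; rewrite (cardsD1 a S) aS /=; lia.
move=> /cards2P[b [c [bc e]]].
have : b \in S :\ a by rewrite e !inE eqxx.
have : c \in S :\ a by rewrite e !inE eqxx orbT.
rewrite !inE => /andP[ca cS] /andP[ba bS].
by exists a, b, c; split => //; split => //; rewrite eq_sym.
Qed.

Lemma tri (V : finType) (adj : rel V) :
  good adj -> forall U : {set V}, (#|cl adj 3 U| <= tt #|U|)%N.
Proof.
move=> g; have [sym [irr K4]] := g.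
suff H : forall n (U : {set V}), (#|U| <= n)%N -> (#|cl adj 3 U| <= tt #|U|)%N.
  by move=> U; apply: (H #|U|).
elim=> [|n IH] U hU.
  suff -> : cl adj 3 U = set0 by rewrite cards0.
  apply/setP => S; rewrite inclP inE; apply/negbTE/negP => /and3P[sU /eqP h3 _].
  by move: (subset_leq_card sU) hU; rewrite h3 => h1 h2; have := leq_trans h1 h2.
case: (boolP [exists x, exists y, exists z,
   [&& x \in U, y \in U, z \in U, adj x y, adj y z & adj x z]]); last first.
  move=> notri; suff -> : cl adj 3 U = set0 by rewrite cards0.
  apply/setP => S; rewrite inclP inE; apply/negbTE/negP => /and3P[sU /eqP h3 /cliqueP C].
  have [a [b [c [aS bS cS [ab bc ac]]]]] := card3_pick h3.
  move/negP: notri; apply; apply/existsP; exists a; apply/existsP; exists b.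
  apply/existsP; exists c; rewrite !(subsetP sU) //=.
  by rewrite !C.
move=> /existsP[x /existsP[y /existsP[z /and5P[xU yU zU xy /andP[yz xz]]]]].
have nxy : x != y by apply: contraTneq xy => ->; rewrite irr.
have nyz : y != z by apply: contraTneq yz => ->; rewrite irr.
have nxz : x != z by apply: contraTneq xz => ->; rewrite irr.
set X := [set x; y; z].
have CX : clique adj X := clique3 sym xy yz xz.
set U' := U :\: X.
have eU' : U' = U :\ x :\ y :\ z.
  by apply/setP => v; rewrite !inE; case: (v == x); case: (v == y); case: (v == z).
have cU := card_sub3 xU yU zU nxy nyz nxz; rewrite -eU' in cU.
have IH' := IH U' ltac:(lia).
set M := [set S in cl adj 3 U | S :&: X != set0].
set L := [set S : {set V} | [&& S \subset U', (#|S| <= 2)%N & clique adj S]].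
have s1 : cl adj 3 U \subset cl adj 3 U' :|: M.
  apply/subsetP => S SU; rewrite in_setU; apply/orP.
  case SX: (S :&: X != set0); first by right; rewrite /M inE SU SX.
  left; move: SU; rewrite !inclP => /and3P[sU h3 hc]; rewrite h3 hc !andbT.
  apply/subsetP => v vS; rewrite /U' inE (subsetP sU _ vS) andbT.
  apply/negP => vX; move/negbFE: SX => /eqP/setP/(_ v).
  by rewrite !inE vS; move: vX; rewrite !inE => ->.
have s2 : [set S :\: X | S in M] \subset L.
  apply/subsetP => Y /imsetP[S]; rewrite /M inE inclP => /andP[/and3P[sU /eqP h3 hc] SX] ->.
  rewrite /L inE; apply/and3P; split.
  - by rewrite /U' setSD.
  - have c0 : (0 < #|S :&: X|)%N by rewrite card_gt0.
    have := cardsID X S; rewrite h3; move: c0.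
    generalize #|S :&: X| #|S :\: X|; clear; lia.
  - exact: clique_sub (subsetDl _ _) hc.
have injf : {in M &, injective (fun S => S :\: X)}.
  move=> S1 S2; rewrite /M inE => /andP[]; rewrite inclP => /and3P[_ /eqP h1 /cliqueP C1] _.
  rewrite inE => /andP[]; rewrite inclP => /and3P[_ /eqP h2 /cliqueP C2] _ eS.
  have Cu : clique adj (S1 :|: S2).
    apply/cliqueP => a b; rewrite !inE.
    have hX : forall v, v \in S1 -> v \notin X -> v \in S2.
      move=> v vS vX; have : v \in S1 :\: X by rewrite in_setD vS vX.
      by rewrite eS in_setD => /andP[].
    have hX' : forall v, v \in S2 -> v \notin X -> v \in S1.
      move=> v vS vX; have : v \in S2 :\: X by rewrite in_setD vS vX.
      by rewrite -eS in_setD => /andP[].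
    move=> /orP[aS|aS] /orP[bS|bS] nab.
    - exact: C1.
    - case aX: (a \in X); case bX: (b \in X).
      + by move/cliqueP: CX; apply.
      + by apply: C1 => //; apply: hX'; rewrite ?bX.
      + by apply: C2 => //; apply: hX; rewrite ?aX.
      + by apply: C2 => //; apply: hX; rewrite ?aX.
    - case aX: (a \in X); case bX: (b \in X).
      + by move/cliqueP: CX; apply.
      + by apply: C2 => //; apply: hX; rewrite ?bX.
      + by apply: C1 => //; apply: hX'; rewrite ?aX.
      + by apply: C1 => //; apply: hX'; rewrite ?aX.
    - exact: C2.
  case: (leqP 4 #|S1 :|: S2|) => [h4 | h3].
    by case: (no_big_clique g Cu h4).
  have e1 : S1 == S1 :|: S2 by rewrite eqEcard subsetUl h1 -ltnS.
  have e2 : S2 == S1 :|: S2 by rewrite eqEcard subsetUr h2 -ltnS.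
  by rewrite (eqP e1) -(eqP e2).
have cM : (#|M| <= #|L|)%N by rewrite -(card_in_imset injf); apply: subset_leq_card.
have s3 : L \subset [set set0] :|: [set [set v] | v in U'] :|: cl adj 2 U'.
  apply/subsetP => S; rewrite /L inE => /and3P[sU h2 hc].
  rewrite !in_setU; move: h2; rewrite leq_eqVlt ltnS leq_eqVlt ltnS leqn0.
  case/or3P => h.
  - by rewrite inclP sU h hc !orbT.
  - move/cards1P: h => [v eS]; rewrite eS; apply/orP; left; apply/orP; right.
    by apply/imsetP; exists v => //; apply: (subsetP sU); rewrite eS inE.
  - by move/eqP/cards0_eq: h => ->; rewrite inE eqxx.
have cL : (#|L| <= 1 + #|U'| + #|cl adj 2 U'|)%N.
  apply: (leq_trans (subset_leq_card s3)); apply: (leq_trans (cardU_le _ _)).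
  rewrite leq_add2r; apply: (leq_trans (cardU_le _ _)).
  by rewrite cards1 leq_add2l leq_imset_card.
have cT := turan g U'.
have c3 : (#|cl adj 3 U| <= #|cl adj 3 U'| + #|M|)%N.
  by apply: (leq_trans (subset_leq_card s1)); apply: cardU_le.
have ar := a4 #|U'|.
rewrite cU; move: IH' ar cT c3 cM cL.
generalize (#|U'| * #|U'| %/ 3) (tt #|U'|) (tt (#|U'| + 3)).
clear; lia.
Qed.

Local Open Scope ring_scope.

Lemma dist_ge0 p q : 0 <= dist p q.
Proof. exact: sqrtr_ge0. Qed.

Lemma dist_sym p q : dist p q = dist q p.
Proof. by rewrite /dist; congr Num.sqrt; ring. Qed.

Lemma dist_sq p q : dist p q ^+ 2 = (p.1 - q.1) ^+ 2 + (p.2 - q.2) ^+ 2.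
Proof. by rewrite /dist sqr_sqrtr // addr_ge0 // sqr_ge0. Qed.

Lemma dist_tri p q r : dist p r <= dist p q + dist q r.
Proof.
set X := dist p q; set Y := dist q r.
have X0 : 0 <= X by exact: dist_ge0.
have Y0 : 0 <= Y by exact: dist_ge0.
have hX := dist_sq p q; have hY := dist_sq q r. rewrite -/X in hX; rewrite -/Y in hY.
rewrite /dist -[X + Y]ger0_norm ?addr_ge0 // -sqrtr_sqr.
apply: ler_wsqrtr.
set a := p.1 - q.1; set b := q.1 - r.1; set c := p.2 - q.2; set d := q.2 - r.2.
have -> : p.1 - r.1 = a + b by rewrite /a /b; ring.
have -> : p.2 - r.2 = c + d by rewrite /c /d; ring.
rewrite -/a -/c in hX; rewrite -/b -/d in hY.
have cs : (a * b + c * d) ^+ 2 <= (X * Y) ^+ 2.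
  rewrite exprMn hX hY.
  have : 0 <= (a * d - b * c) ^+ 2 by exact: sqr_ge0.
  lra.
have XY0 : 0 <= X * Y by exact: mulr_ge0.
have : a * b + c * d <= X * Y by nra.
move: hX hY; rewrite !expr2; nra.
Qed.

Lemma gram_alg (t sg u1 u2 v1 v2 w1 w2 : R) : 0 <= t -> t <= 1/100 -> 0 < sg ->
  let B x := sg * (1 - t) <= x <= sg * (1 + t) in
  B (u1^+2 + u2^+2) -> B (v1^+2 + v2^+2) -> B (w1^+2 + w2^+2) ->
  B ((u1-v1)^+2 + (u2-v2)^+2) -> B ((u1-w1)^+2 + (u2-w2)^+2) ->
  B ((v1-w1)^+2 + (v2-w2)^+2) -> False.
Proof.
move=> t0 t1 sg0 B; rewrite /B.
set g11 := u1^+2 + u2^+2; set g22 := v1^+2 + v2^+2; set g33 := w1^+2 + w2^+2.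
move=> /andP[a1 b1] /andP[a2 b2] /andP[a3 b3].
have e12 : (u1-v1)^+2 + (u2-v2)^+2 = g11 + g22 - 2 * (u1*v1 + u2*v2) by rewrite /g11 /g22; ring.
have e13 : (u1-w1)^+2 + (u2-w2)^+2 = g11 + g33 - 2 * (u1*w1 + u2*w2) by rewrite /g11 /g33; ring.
have e23 : (v1-w1)^+2 + (v2-w2)^+2 = g22 + g33 - 2 * (v1*w1 + v2*w2) by rewrite /g33 /g22; ring.
rewrite e12 e13 e23.
set g12 := u1*v1 + u2*v2; set g13 := u1*w1 + u2*w2; set g23 := v1*w1 + v2*w2.
move=> /andP[a12 b12] /andP[a13 b13] /andP[a23 b23].
have det0 : g11*g22*g33 + 2*(g12*g13*g23) - g11*(g23*g23) - g22*(g13*g13) - g33*(g12*g12) = 0.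
  by rewrite /g11 /g22 /g33 /g12 /g13 /g23; ring.
set L := sg * (1 - t); set H := sg * (1 + t).
set l := sg * (1/2 - 3/2 * t); set h := sg * (1/2 + 3/2 * t).
have L0 : 0 <= L by rewrite /L; nra.
have l0 : 0 <= l by rewrite /l; nra.
have Lg11 : L <= g11 by rewrite /L; lra.
have Lg22 : L <= g22 by rewrite /L; lra.
have Lg33 : L <= g33 by rewrite /L; lra.
have Hg11 : g11 <= H by rewrite /H; lra.
have Hg22 : g22 <= H by rewrite /H; lra.
have Hg33 : g33 <= H by rewrite /H; lra.
have lg12 : l <= g12 by rewrite /l; lra.
have lg13 : l <= g13 by rewrite /l; lra.
have lg23 : l <= g23 by rewrite /l; lra.
have hg12 : g12 <= h by rewrite /h; lra.
have hg13 : g13 <= h by rewrite /h; lra.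
have hg23 : g23 <= h by rewrite /h; lra.
have P1 : L * L * L <= g11 * g22 * g33.
  have LL : L * L <= g11 * g22 by apply: ler_pM.
  by apply: ler_pM => //; apply: mulr_ge0.
have P2 : l * l * l <= g12 * g13 * g23.
  have LL : l * l <= g12 * g13 by apply: ler_pM.
  by apply: ler_pM => //; apply: mulr_ge0.
have Q (x y : R) : l <= y -> y <= h -> L <= x -> x <= H -> x * (y * y) <= H * (h * h).
  move=> ly yh Lx xH.
  have yy : y * y <= h * h by apply: ler_pM; lra.
  have y0 : 0 <= y * y by apply: mulr_ge0; lra.
  apply: ler_pM => //; lra.
have Q1 := Q _ _ lg23 hg23 Lg11 Hg11.
have Q2 := Q _ _ lg13 hg13 Lg22 Hg22.
have Q3 := Q _ _ lg12 hg12 Lg33 Hg33.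
have key : L * L * L + 2 * (l * l * l) - 3 * (H * (h * h)) =
   sg * sg * sg * (1/2 - 21/2 * t - 3/2 * (t * t) - 29/2 * (t * t * t)).
  by rewrite /L /l /H /h; field.
have pt : 1/4 <= 1/2 - 21/2 * t - 3/2 * (t * t) - 29/2 * (t * t * t).
  have tt1 : t * t <= t / 100 by nra.
  have tt2 : t * t * t <= t / 100 by nra.
  lra.
have s3 : 0 < sg * sg * sg by rewrite !mulr_gt0.
have : sg * sg * sg * (1/4) <= sg * sg * sg * (1/2 - 21/2 * t - 3/2 * (t * t) - 29/2 * (t * t * t)).
  by rewrite ler_pM2l.
lra.
Qed.

Lemma sqI (s eps x : R) : 0 < s -> 0 < eps -> eps <= 1/1000 ->
  s - 2 * eps * s <= x <= s + 2 * eps * s ->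
  s ^+ 2 * (1 - 5 * eps) <= x ^+ 2 <= s ^+ 2 * (1 + 5 * eps).
Proof.
move=> s0 e0 e1 /andP[h1 h2].
have x0 : 0 <= s - 2 * eps * s by nra.
have A : (s - 2 * eps * s) ^+ 2 <= x ^+ 2.
  by rewrite !expr2; apply: ler_pM.
have B : x ^+ 2 <= (s + 2 * eps * s) ^+ 2.
  by rewrite !expr2; apply: ler_pM => //; lra.
have C : s ^+ 2 * (1 - 5 * eps) <= (s - 2 * eps * s) ^+ 2.
  have -> : (s - 2 * eps * s) ^+ 2 = s ^+ 2 * (1 - 4 * eps + 4 * eps ^+ 2) by ring.
  rewrite ler_pM2l; last by rewrite exprn_gt0.
  rewrite expr2; nra.
have D : (s + 2 * eps * s) ^+ 2 <= s ^+ 2 * (1 + 5 * eps).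
  have -> : (s + 2 * eps * s) ^+ 2 = s ^+ 2 * (1 + 4 * eps + 4 * eps ^+ 2) by ring.
  rewrite ler_pM2l; last by rewrite exprn_gt0.
  rewrite expr2; nra.
apply/andP; split; lra.
Qed.

Definition Ival (s eps x : R) : bool := (s - 2 * eps * s <= x) && (x <= s + 2 * eps * s).

Lemma K4geo (s eps : R) (a b c d : pt) : 0 < s -> 0 < eps -> eps <= 1/1000 ->
  Ival s eps (dist a b) -> Ival s eps (dist a c) -> Ival s eps (dist a d) ->
  Ival s eps (dist b c) -> Ival s eps (dist b d) -> Ival s eps (dist c d) -> False.
Proof.
move=> s0 e0 e1 hab hac had hbc hbd hcd.
have S := sqI s0 e0 e1.
move: (S _ hab) (S _ hac) (S _ had) (S _ hbc) (S _ hbd) (S _ hcd).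
rewrite !dist_sq.
have s2 : 0 < s ^+ 2 by rewrite exprn_gt0.
have t0 : 0 <= 5 * eps by lra.
have t1 : 5 * eps <= 1/100 by lra.
move=> B1 B2 B3 B4 B5 B6.
apply: (@gram_alg (5 * eps) (s ^+ 2) (b.1 - a.1) (b.2 - a.2) (c.1 - a.1) (c.2 - a.2) (d.1 - a.1) (d.2 - a.2) t0 t1 s2) => /=.
- by have -> : (b.1 - a.1) ^+ 2 + (b.2 - a.2) ^+ 2 = (a.1 - b.1) ^+ 2 + (a.2 - b.2) ^+ 2 by ring.
- by have -> : (c.1 - a.1) ^+ 2 + (c.2 - a.2) ^+ 2 = (a.1 - c.1) ^+ 2 + (a.2 - c.2) ^+ 2 by ring.
- by have -> : (d.1 - a.1) ^+ 2 + (d.2 - a.2) ^+ 2 = (a.1 - d.1) ^+ 2 + (a.2 - d.2) ^+ 2 by ring.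
- by have -> : (b.1 - a.1 - (c.1 - a.1)) ^+ 2 + (b.2 - a.2 - (c.2 - a.2)) ^+ 2 = (b.1 - c.1) ^+ 2 + (b.2 - c.2) ^+ 2 by ring.
- by have -> : (b.1 - a.1 - (d.1 - a.1)) ^+ 2 + (b.2 - a.2 - (d.2 - a.2)) ^+ 2 = (b.1 - d.1) ^+ 2 + (b.2 - d.2) ^+ 2 by ring.
- by have -> : (c.1 - a.1 - (d.1 - a.1)) ^+ 2 + (c.2 - a.2 - (d.2 - a.2)) ^+ 2 = (c.1 - d.1) ^+ 2 + (c.2 - d.2) ^+ 2 by ring.
Qed.

Lemma close (s eps : R) (P Q A B : pt) :
  dist P A <= eps * s -> dist Q B <= eps * s -> dist A B = s -> Ival s eps (dist P Q).
Proof.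
move=> hP hQ hAB; apply/andP; split.
- have t1 := dist_tri A P B; have t2 := dist_tri P Q B.
  rewrite (dist_sym A P) in t1; lra.
- have t1 := dist_tri P A Q; have t2 := dist_tri A B Q.
  rewrite (dist_sym B Q) in t2; lra.
Qed.

Lemma ec_ival (s eps : R) (P Q T : pt) : eps_congr s s s eps P Q T ->
  [/\ Ival s eps (dist P Q), Ival s eps (dist Q T) & Ival s eps (dist P T)].
Proof.
rewrite /eps_congr !minxx => -[A [B [C [[hBC [hCA hAB]] [hA [hB hC]]]]]].
split; [exact: close hA hB hAB | exact: close hB hC hBC | ].
by apply: close hA hC _; rewrite dist_sym.
Qed.

Definition adjG (n : nat) (p : 'I_n -> pt) (s eps : R) : rel 'I_n :=
  fun i j => (i != j) && Ival s eps (dist (p i) (p j)).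

Lemma adjG_good n (p : 'I_n -> pt) (s eps : R) : 0 < s -> 0 < eps -> eps <= 1/1000 ->
  good (adjG p s eps).
Proof.
move=> s0 e0 e1; split; [|split].
- by move=> x y; rewrite /adjG eq_sym dist_sym.
- by move=> x; rewrite /adjG eqxx.
- move=> a b c d; rewrite /adjG => /andP[_ h1] /andP[_ h2] /andP[_ h3] /andP[_ h4]
    /andP[_ h5] /andP[_ h6].
  exact: (K4geo s0 e0 e1 h1 h2 h3 h4 h5 h6).
Qed.

Lemma upper n (p : 'I_n -> pt) (s eps : R) : 0 < s -> 0 < eps -> eps <= 1/1000 ->
  (count_eps p s s s eps <= tt n)%N.
Proof.
move=> s0 e0 e1.
have g := adjG_good p s0 e0 e1.
have [sym _] := g.
have := tri g [set: 'I_n]; rewrite cardsT card_ord; apply: leq_trans.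
apply: subset_leq_card; apply/subsetP => S; rewrite inE => /andP[h3 /asboolP[i [j [k [eS ec]]]]].
rewrite inclP subsetT h3 /=.
have [hij hjk hik] := ec_ival ec.
apply/cliqueP => x y; rewrite eS !inE => hx hy nxy.
move: hx hy nxy => /orP[/orP[]|] /eqP-> /orP[/orP[]|] /eqP->; rewrite ?eqxx // => nxy;
  rewrite /adjG nxy /=; first [done | by rewrite dist_sym].
Qed.

Definition V0 (s : R) : pt := (0, 0).
Definition V1 (s : R) : pt := (s, 0).
Definition V2 (s : R) : pt := (s / 2, s * Num.sqrt 3 / 2).
Definition vert (s : R) (n i : nat) : pt :=
  if (i < n %/ 3)%N then V0 s else if (i < n %/ 3 + (n + 1) %/ 3)%N then V1 s else V2 s.
Definition pc (s eps : R) (n : nat) (i : 'I_n) : pt :=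
  ((vert s n i).1, (vert s n i).2 + eps * s / n%:R * i%:R).

Lemma dist_eq (P Q : pt) (x : R) : 0 <= x ->
  (P.1 - Q.1) ^+ 2 + (P.2 - Q.2) ^+ 2 = x ^+ 2 -> dist P Q = x.
Proof. by move=> x0 h; rewrite /dist h sqrtr_sqr ger0_norm. Qed.

Lemma sqrt3 : Num.sqrt (3 : R) ^+ 2 = 3.
Proof. by rewrite sqr_sqrtr. Qed.

Lemma d01 s : 0 <= s -> dist (V0 s) (V1 s) = s.
Proof. by move=> s0; apply: dist_eq => //=; ring. Qed.
Lemma d12 s : 0 <= s -> dist (V1 s) (V2 s) = s.
Proof.
move=> s0; apply: dist_eq => //=.
have h := sqrt3.
rewrite !expr2 in h *.
have -> : (0 - s * Num.sqrt 3 / 2) * (0 - s * Num.sqrt 3 / 2) = s * s * (Num.sqrt 3 * Num.sqrt 3) / 4 by field.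
rewrite h; field; lra.
Qed.
Lemma d20 s : 0 <= s -> dist (V2 s) (V0 s) = s.
Proof.
move=> s0; apply: dist_eq => //=.
have h := sqrt3.
rewrite !expr2 in h *.
have -> : (s * Num.sqrt 3 / 2 - 0) * (s * Num.sqrt 3 / 2 - 0) = s * s * (Num.sqrt 3 * Num.sqrt 3) / 4 by field.
rewrite h; field; lra.
Qed.

Lemma pc_close (s eps : R) n (i : 'I_n) : 0 < s -> 0 < eps ->
  dist (pc s eps i) (vert s n i) <= eps * s.
Proof.
move=> s0 e0.
have n0 : (0 < n)%N by case: i => [m]; case: n => //.
have nR : (0 : R) < n%:R by rewrite ltr0n.
have iR : (i%:R : R) <= n%:R by rewrite ler_nat ltnW.
have i0 : (0 : R) <= i%:R by exact: ler0n.
set d := eps * s / n%:R * i%:R.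
have d0 : 0 <= d by rewrite /d !mulr_ge0 // ?invr_ge0 ?ltW // mulr_gt0.
rewrite (@dist_eq _ _ d) //=; last by rewrite /d; ring.
have nz : n%:R != 0 :> R by rewrite pnatr_eq0 -lt0n.
have e : eps * s = eps * s / n%:R * n%:R by rewrite divfK.
rewrite /d [X in _ <= X]e ler_pM2l //.
by apply: divr_gt0 => //; apply: mulr_gt0.
Qed.

Lemma card3 (T : finType) (x y z : T) : x != y -> y != z -> x != z ->
  #|[set x; y; z]| = 3%N.
Proof.
move=> xy yz xz.
have -> : [set x; y; z] = x |: [set y; z].
  by apply/setP => v; rewrite !inE orbA.
by rewrite cardsU1 cards2 !inE negb_or xy xz yz.
Qed.

Lemma vert_inj (s : R) n (i j : nat) : 0 < s ->
  (vert s n i).1 = (vert s n j).1 -> vert s n i = vert s n j.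
Proof.
move=> s0; rewrite /vert.
case: ifP => _; [|case: ifP => _]; case: ifP => _; try case: ifP => _;
  rewrite /= => h //; exfalso; lra.
Qed.

Lemma pc_inj (s eps : R) n : 0 < s -> 0 < eps -> injective (@pc s eps n).
Proof.
move=> s0 e0 i j e.
have e1 := congr1 fst e; have e2 := congr1 snd e; rewrite /= in e1 e2.
have ev := vert_inj s0 e1; rewrite ev in e2.
move/addrI: e2 => /mulfI.
have n0 : (0 < n)%N := leq_ltn_trans (leq0n _) (ltn_ord i).
have nz : n%:R != 0 :> R by rewrite pnatr_eq0 -lt0n.
have dz : eps * s / n%:R != 0.
  by rewrite mulf_neq0 ?invr_eq0 // mulf_neq0 // gt_eqF.
move=> /(_ dz) /eqP; rewrite eqr_nat => /eqP; exact: val_inj.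
Qed.

Lemma lower n (s eps : R) : 0 < s -> 0 < eps ->
  (tt n <= count_eps (@pc s eps n) s s s eps)%N.
Proof.
move=> s0 e0.
have hn3 := a3 n.
have Ha : forall i : 'I_(n %/ 3), (i < n)%N.
  by move=> i; have := ltn_ord i; lia.
have Hb : forall j : 'I_((n + 1) %/ 3), (n %/ 3 + j < n)%N.
  by move=> j; have := ltn_ord j; lia.
have Hc : forall k : 'I_((n + 2) %/ 3), (n %/ 3 + (n + 1) %/ 3 + k < n)%N.
  by move=> k; have := ltn_ord k; lia.
pose F := fun t : 'I_(n %/ 3) * 'I_((n + 1) %/ 3) * 'I_((n + 2) %/ 3) =>
  [set Ordinal (Ha t.1.1); Ordinal (Hb t.1.2); Ordinal (Hc t.2)].
have injF : {in [set: 'I_(n %/ 3) * 'I_((n + 1) %/ 3) * 'I_((n + 2) %/ 3)] &, injective F}.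
  move=> [[i j] k] [[i' j'] k'] _ _ eF.
  have hi : Ordinal (Ha i) \in F (i', j', k') by rewrite -eF !inE eqxx.
  have hj : Ordinal (Hb j) \in F (i', j', k') by rewrite -eF !inE eqxx orbT.
  have hk : Ordinal (Hc k) \in F (i', j', k') by rewrite -eF !inE eqxx !orbT.
  have li := ltn_ord i; have li' := ltn_ord i'; have lj := ltn_ord j; have lj' := ltn_ord j'.
  have lk := ltn_ord k; have lk' := ltn_ord k'.
  move: hi hj hk; rewrite !inE -!val_eqE /=.
  move=> /orP[/orP[]|] /eqP hi /orP[/orP[]|] /eqP hj /orP[/orP[]|] /eqP hk; try lia.
  by congr (_, _, _); apply: val_inj => /=; lia.
have -> : tt n = #|[set: 'I_(n %/ 3) * 'I_((n + 1) %/ 3) * 'I_((n + 2) %/ 3)]|.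
  by rewrite cardsT !card_prod !card_ord.
rewrite -(card_in_imset injF).
apply: subset_leq_card; apply/subsetP => S /imsetP[[[i j] k] _ ->].
set x := Ordinal (Ha i); set y := Ordinal (Hb j); set z := Ordinal (Hc k).
have li := ltn_ord i; have lj := ltn_ord j; have lk := ltn_ord k.
have vx : vert s n x = V0 s by rewrite /vert /= ifT //.
have vy : vert s n y = V1 s by rewrite /vert /= ifF ?ifT //; lia.
have vz : vert s n z = V2 s by rewrite /vert /= ifF ?ifF //; lia.
rewrite inE; apply/andP; split.
  rewrite /F /= card3 // -val_eqE /=; lia.
apply/asboolP; exists x, y, z; split => //.
rewrite /eps_congr !minxx; exists (V0 s), (V1 s), (V2 s).
split; first by split; [apply: d12 | split; [apply: d20 | apply: d01]]; lra.
by rewrite -vx -vy -vz !pc_close.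
Qed.

Lemma is_h_eps_uniq n (a b c e : R) m1 m2 :
  is_h_eps n a b c e m1 -> is_h_eps n a b c e m2 -> m1 = m2.
Proof.
move=> [[p1 [i1 c1]] u1] [[p2 [i2 c2]] u2].
have := u2 p1 i1; have := u1 p2 i2; rewrite c1 c2; lia.
Qed.

Lemma is_h_eps_ex n (a b c e : R) : exists m, is_h_eps n a b c e m.
Proof.
pose P := fun m => `[< exists p : 'I_n -> pt, injective p /\ count_eps p a b c e = m >].
have exP : exists m, P m.
  exists (count_eps (@pc 1 1 n) a b c e); apply/asboolP.
  by exists (@pc 1 1 n); split => //; apply: pc_inj; lra.
have ubP : forall m, P m -> (m <= #|{set 'I_n}|)%N.
  move=> m /asboolP[p [_ <-]]; exact: max_card.
case: (ex_maxnP exP ubP) => m Pm mx.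
exists m; split; first exact/asboolP.
move=> p ip; apply: mx; apply/asboolP; by exists p.
Qed.

Lemma h_eps_spec n (a b c e : R) : is_h_eps n a b c e (h_eps n a b c e).
Proof. by rewrite /h_eps; apply: epsilon_spec; apply: is_h_eps_ex. Qed.

Lemma is_h_uniq n (a b c : R) m1 m2 : is_h n a b c m1 -> is_h n a b c m2 -> m1 = m2.
Proof.
move=> [[e1 [e10 h1]] u1] [[e2 [e20 h2]] u2].
apply/eqP; rewrite eqn_leq; apply/andP; split.
  by rewrite -h2; apply: u1.
by rewrite -h1; apply: u2.
Qed.

Theorem theorem1p1 (s : R) (hs : 0 < s) (n : nat) (hn : (0 < n)%N) :
  h n s s s = (n %/ 3 * ((n + 1) %/ 3) * ((n + 2) %/ 3))%N.
Proof.
change (h n s s s = tt n).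
have e0 : (0 : R) < 1/1000 by lra.
have e1 : (1/1000 : R) <= 1/1000 by lra.
have Hh : is_h n s s s (tt n).
  split.
    exists (1/1000); split => //.
    apply: (is_h_eps_uniq (h_eps_spec _ _ _ _ _)).
    split.
      exists (@pc s (1/1000) n); split; first exact: pc_inj.
      apply/eqP; rewrite eqn_leq upper //= lower //.
    by move=> p _; apply: upper.
  move=> eps eps0.
  have [_ u] := h_eps_spec n s s s eps.
  exact: (leq_trans (lower n hs eps0) (u _ (pc_inj (n:=n) hs eps0))).
exact: (is_h_uniq (epsilon_spec (inhabits 0%N) (is_h n s s s) (ex_intro _ (tt n) Hh)) Hh).
Qed.
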